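(* Let $m$ be a positive integer and let $e$ be an integer with $1\le e\le 3^m-2$. If the monomial $x^e$ is APN or planar over $\mathrm{GF}(3^m)$, then: $e$ is even; $\gcd(e,3^m-1)=2$; $\ell_e=|C_e|=m$; and $e\notin C_1$.
   Context: A function $f:\mathrm{GF}(q)\to\mathrm{GF}(q)$ is almost perfect nonlinear (APN) if $\max_{a\in\mathrm{GF}(q)^*}\max_{b\in\mathrm{GF}(q)}|\{x\in\mathrm{GF}(q): f(x+a)-f(x)=b\}|=2$, and planar (perfect nonlinear) if this maximum equals $1$. For $n=3^m-1$ and $j\in\mathbb{Z}_n$, $C_j=\{j,3j,\dots,3^{\ell_j-1}j\}$ (mod $n$) is the $3$-cyclotomic coset modulo $n$ containing $j$, where $\ell_j$ is the smallest positive integer with $3^{\ell_j}j\equiv j\pmod n$. *)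

(* Defs.v *)
From mathcomp Require Import all_boot all_algebra all_field.
Set Implicit Arguments. Unset Strict Implicit. Unset Printing Implicit Defensive.
Import GRing.Theory.
Local Open Scope ring_scope.

Definition ddt_entry (F : finFieldType) (f : F -> F) (a b : F) : nat :=
  #|[set x : F | f (x + a) - f x == b]|.

Definition diff_unif (F : finFieldType) (f : F -> F) : nat :=
  (\max_(a : F | a != 0%R) \max_(b : F) ddt_entry f a b)%N.

Definition APN (F : finFieldType) (f : F -> F) : Prop := diff_unif f = 2%N.
Definition planar (F : finFieldType) (f : F -> F) : Prop := diff_unif f = 1%N.

Local Close Scope ring_scope.

(* ell_j : smallest positive l with 3^l * j = j (mod n).  Such an l <= n
   always exists when n = 3^m - 1 >= 2 (3 is a unit mod n), so searching
   l in 1..n is exact. *)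
Definition cyc_ell (n j : nat) : nat :=
  (find (fun i => (3 ^ i.+1 * j) %% n == j %% n) (iota 0 n)).+1.

Definition cyc_coset (n j : nat) : seq nat :=
  [seq (3 ^ i * j) %% n | i <- iota 0 (cyc_ell n j)].

Definition cyc_coset_card (n j : nat) : nat := size (undup (cyc_coset n j)).

(* Main.v *)
Require Import Defs.
From mathcomp Require Import all_boot all_algebra all_field.
From mathcomp Require Import cyclic zify.
Import GRing.Theory.
Lemma key (m e k : nat) : 0 < m -> gcdn e (3 ^ m - 1) = 2 -> 0 < k < m ->
  ~~ (3 ^ m - 1 %| (3 ^ k - 1) * e).
Proof.
move=> m0 g /andP[k0 km].
have t1 : 3 ^ k.+1 <= 3 ^ m by rewrite leq_exp2l.
have t0 : 3 <= 3 ^ k by rewrite -{1}(expn1 3) leq_exp2l.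
rewrite expnS in t1.
have de : 2 %| e by rewrite -{1}g dvdn_gcdl.
have dn : 2 %| 3 ^ m - 1 by rewrite -{1}g dvdn_gcdr.
case/dvdnP: de => e' he; subst e; case/dvdnP: dn => n' hn; rewrite hn.
have g' : gcdn e' n' = 1.
  move: g; rewrite hn. rewrite -muln_gcdl. lia.
rewrite mulnA dvdn_pmul2r //.
rewrite Gauss_dvdl; last by rewrite /coprime gcdnC g'.
apply/negP => /dvdn_leq; lia.
Qed.

Lemma Pdvd (n k e : nat) : ((3 ^ k * e) %% n == e %% n) = (n %| (3 ^ k - 1) * e).
Proof.
rewrite eqn_mod_dvd ?mulnBl ?mul1n //.
by rewrite leq_pmull // expn_gt0.
Qed.

Lemma ellP (m e : nat) : 0 < m -> gcdn e (3 ^ m - 1) = 2 ->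
  cyc_ell (3 ^ m - 1) e = m.
Proof.
move=> m0 g; rewrite /cyc_ell.
set n := 3 ^ m - 1.
have mn : m.-1 < n.
  rewrite /n; have := ltn_expl m (isT : 1 < 3); lia.
set P := (fun i => _).
have Pm : P m.-1 by rewrite /P prednK // Pdvd dvdn_mulr.
have hP : has P (iota 0 n).
  by apply/hasP; exists m.-1 => //; rewrite mem_iota.
have fl := has_find P (iota 0 n); rewrite hP size_iota in fl.
have Pj := nth_find 0 hP; rewrite nth_iota // add0n in Pj.
set j := find P (iota 0 n) in fl Pj *.
have : ~~ (j < m.-1).
  apply/negP => jm; move: Pj; rewrite /P Pdvd; apply/negP; apply: key => //; lia.
have : ~~ (m.-1 < j).
  apply/negP => jm; have := before_find 0 jm; rewrite nth_iota ?add0n ?Pm //; lia.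
lia.
Qed.

Lemma cop3 (m i : nat) : 0 < m -> coprime (3 ^ m - 1) (3 ^ i).
Proof.
move=> m0; apply: coprimeXr.
have h : coprime (3 ^ m - 1) (3 ^ m).
  by have := coprimenS (3 ^ m - 1); rewrite subn1 prednK ?expn_gt0.
apply: coprime_dvdr h; rewrite -(prednK m0) expnS dvdn_mulr //.
Qed.

Lemma cardP (m e : nat) : 0 < m -> gcdn e (3 ^ m - 1) = 2 ->
  cyc_coset_card (3 ^ m - 1) e = m.
Proof.
move=> m0 g; rewrite /cyc_coset_card /cyc_coset ellP //.
rewrite undup_id ?size_map ?size_iota //.
rewrite map_inj_in_uniq ?iota_uniq //.
have H : forall i j, i < m -> j < m -> i <= j ->
    (3 ^ i * e) %% (3 ^ m - 1) = (3 ^ j * e) %% (3 ^ m - 1) -> i = j.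
  move=> i j im jm ij /eqP.
  rewrite -(subnK ij) expnD -mulnA eq_sym eqn_mod_dvd; last first.
    by rewrite leq_pmull ?expn_gt0.
  rewrite -{2}(mul1n (3 ^ i * e)) -mulnBl mulnCA Gauss_dvdr; last exact: cop3.
  case: (posnP (j - i)) => [|k0]; first lia.
  move=> hd; exfalso; move: hd; apply/negP; apply: key => //; lia.
move=> i j; rewrite !mem_iota !add0n /= => im jm hij.
case: (leqP i j) => ij; first exact: H.
exact: (esym (H j i jm im (ltnW ij) (esym hij))).
Qed.

Lemma notC1 (m e : nat) : 0 < m -> gcdn e (3 ^ m - 1) = 2 ->
  e \notin cyc_coset (3 ^ m - 1) 1.
Proof.
move=> m0 g; apply/negP; rewrite /cyc_coset => /mapP [i _ he].
move: g; rewrite he muln1 gcdn_modl gcdnC.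
by have := cop3 m i m0; rewrite /coprime => /eqP ->.
Qed.

Lemma ddt_le (F : finFieldType) (f : F -> F) a b : a != 0%R -> ddt_entry f a b <= diff_unif f.
Proof.
move=> a0; rewrite /diff_unif.
apply: leq_trans (leq_bigmax_cond (F := fun a => \max_(b : F) ddt_entry f a b) a a0).
exact: (leq_bigmax (F := fun b => ddt_entry f a b)).
Qed.

Lemma three (F : finFieldType) (f : F -> F) b x1 x2 x3 :
  x1 != x2 -> x1 != x3 -> x2 != x3 ->
  (f (x1 + 1%R) - f x1 = b)%R -> (f (x2 + 1%R) - f x2 = b)%R -> (f (x3 + 1%R) - f x3 = b)%R ->
  3 <= ddt_entry f 1%R b.
Proof.
move=> n12 n13 n23 h1 h2 h3; rewrite /ddt_entry cardE.
have -> : 3 = size [:: x1; x2; x3] by [].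
apply: uniq_leq_size.
  by rewrite /= !inE negb_or n12 n13 n23.
move=> x; rewrite !inE mem_enum inE => /or3P [] /eqP ->; apply/eqP => //.
Qed.

Local Open Scope ring_scope.
Lemma sol (F : fieldType) (y : F) e : y != 1 -> y ^+ e = 1 ->
  ((y - 1)^-1 + 1) ^+ e - ((y - 1)^-1) ^+ e = 0.
Proof.
move=> y1 ye; set x := (y - 1)^-1.
have hx : (x * (y - 1) = 1)%R by rewrite mulVf // subr_eq0.
have -> : (x + 1 = x * y)%R.
  by apply/eqP; rewrite eq_sym addrC -subr_eq -hx mulrBr mulr1.
by rewrite exprMn ye mulr1 subrr.
Qed.

Lemma field_part (m : nat) (F : finFieldType) (e : nat) :
  (0 < m)%N -> #|F| = (3 ^ m)%N -> (0 < e)%N ->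
  (forall b : F, (ddt_entry (fun x : F => x ^+ e) 1%R b <= 2)%N) ->
  ~~ odd e /\ gcdn e (3 ^ m - 1) = 2%N.
Proof.
move=> m0 cF e0 H.
have h3 : (3%:R : F) = 0 by apply: pcharf0; apply: (card_finPcharP cF).
have e3 : (1 + 1 + 1 : F) = 0 by rewrite -h3 !mulrS mulr0n addr0 addrA.
have n11 : (1 : F) != -1.
  apply/negP => /eqP h; move: e3; rewrite {1}h addNr add0r => /eqP.
  by rewrite oner_eq0.
have oe : ~~ odd e.
  apply/negP => oe.
  have := H 1; apply/negP; rewrite -ltnNge.
  apply: (@three _ _ _ 0 1 (-1)).
  - by rewrite eq_sym oner_eq0.
  - by rewrite eq_sym oppr_eq0 oner_eq0.
  - exact: n11.
  - by rewrite add0r expr1n expr0n eqn0Ngt e0 subr0.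
  - have h2 : (1 + 1 : F) = -1 by apply/eqP; rewrite -subr_eq0 opprK e3.
    by rewrite h2 -signr_odd oe expr1n expr1 -opprD h2 opprK.
  - by rewrite addNr expr0n eqn0Ngt e0 /= -signr_odd oe expr1 sub0r opprK.
split => //.
set n := (3 ^ m - 1)%N.
have n0 : (0 < n)%N by rewrite /n; have := ltn_expl m (isT : (1 < 3)%N); lia.
have nF : n = #|F|.-1 by rewrite cF /n subn1.
set d := gcdn e n.
have d2 : (2 %| d)%N.
  rewrite dvdn_gcd dvdn2 oe /= /n.
  by rewrite dvdn2 oddB ?expn_gt0 // oddX orbT.
have dn : (d %| n)%N by apply: dvdn_gcdr.
have de : (d %| e)%N by apply: dvdn_gcdl.
have d0 : (0 < d)%N by rewrite gcdn_gt0 n0 orbT.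
apply/eqP; apply/negP => /negP dne2.
have d4 : (4 <= d)%N by move: d2 dne2 d0; lia.
pose rs := enum [pred x : F | x != 0].
have [z zrs zp] : exists2 z, z \in rs & n.-primitive_root z.
  apply/hasP; apply: has_prim_root => //.
  - apply/allP => x; rewrite mem_enum inE => x0.
    rewrite unity_rootE nF; apply/eqP; apply: (mulIf x0).
    by rewrite mul1r -exprSr prednK ?expf_card // cF expn_gt0.
  - exact: enum_uniq.
  - by rewrite -cardE cardC1 nF.
pose c := (n %/ d)%N.
have cd : (c * d = n)%N by rewrite divnK.
pose y k := z ^+ (c * k).
have yne1 : forall k, (0 < k < d)%N -> y k != 1.
  move=> k /andP [k0 kd]; rewrite /y -(prim_order_dvd zp).
  apply/negP => /dvdn_leq; rewrite -cd; have : (0 < c)%N.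
    by rewrite divn_gt0 // dvdn_leq.
  move=> c0; rewrite muln_gt0 c0 k0 => /(_ isT); rewrite leq_mul2l; lia.
have ye : forall k, y k ^+ e = 1.
  move=> k; rewrite /y -exprM; apply/eqP; rewrite -(prim_order_dvd zp).
  by rewrite -cd -mulnA dvdn_mul // dvdn_mull.
have z0 : z != 0 by move: zrs; rewrite mem_enum.
have yinj : forall i j, (0 < j - i < d)%N -> y i != y j.
  move=> i j hij; apply/negP => /eqP hy.
  have := yne1 _ hij; apply/negP/negPn/eqP.
  apply: (mulfI (expf_neq0 (c * i) z0)).
  rewrite mulr1 -exprD -mulnDr subnKC; last lia.
  exact: (esym hy).
have x_inj : forall i j, (0 < j - i < d)%N -> (y i - 1)^-1 != (y j - 1)^-1.
  move=> i j hij; apply: contra (yinj i j hij) => /eqP /invr_inj /eqP.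
  by rewrite (inj_eq (addIr _)).
have := H 0; apply/negP; rewrite -ltnNge.
apply: (@three _ _ _ (y 1 - 1)^-1 (y 2 - 1)^-1 (y 3 - 1)^-1).
- by apply: x_inj; lia.
- by apply: x_inj; lia.
- by apply: x_inj; lia.
- by apply: sol; [apply: yne1; lia | apply: ye].
- by apply: sol; [apply: yne1; lia | apply: ye].
- by apply: sol; [apply: yne1; lia | apply: ye].
Qed.

Local Close Scope ring_scope.

Theorem lemma2 (m : nat) (F : finFieldType) (e : nat) :
  0 < m -> #|F| = 3 ^ m -> 1 <= e <= 3 ^ m - 2 ->
  (APN (fun x : F => (x ^+ e)%R) \/ planar (fun x : F => (x ^+ e)%R)) ->
  [/\ ~~ odd e,
      gcdn e (3 ^ m - 1) = 2,
      cyc_ell (3 ^ m - 1) e = m,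
      cyc_coset_card (3 ^ m - 1) e = m
    & e \notin cyc_coset (3 ^ m - 1) 1].
Proof.
move=> m0 cF /andP[e1 e2] hA.
have H : forall b : F, ddt_entry (fun x : F => (x ^+ e)%R) 1%R b <= 2.
  move=> b; have := @ddt_le F (fun x : F => (x ^+ e)%R) 1%R b (GRing.oner_neq0).
  by case: hA; rewrite /APN /planar => -> h; apply: (leq_trans h).
have [oe g] := @field_part m F e m0 cF e1 H.
split; [exact: oe | exact: g | exact: (ellP m e m0 g) | exact: (cardP m e m0 g) | exact: (notC1 m e m0 g)].
Qed.
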